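(* Let $B\subset\mathbb R^8$ be a bounded domain and let $(B^h)_{h>0}$, $B^h\subset\mathbb Z^8_h$, converge to $B$. Let $f\in C^1(B,\mathbb O)$ and suppose there are functions $f^h:B^h\to\mathbb O$ with $D^hf^h(x)=0$ for every $x\in(B^h)^\circ$ and $$\lim_{h\to0^+}\ \max_{x\in B^h\cap B}|f(x)-f^h(x)|=0.$$ Then $Df=0$ on $B$.
   Context: $\mathbb O$ is the real octonion algebra with basis $\mathbf e_0=1,\dots,\mathbf e_7$, identified with $\mathbb R^8$; $|\cdot|$ is the Euclidean norm. $Df=\sum_{l=0}^7\mathbf e_l\,\partial f/\partial x_l$. For $h>0$, $\mathbb Z^8_h=(h\mathbb Z)^8$, $e_0,\dots,e_7$ are the standard unit vectors, $D^hf(x)=\sum_{l=0}^7\mathbf e_l\frac{f(x+he_l)-f(x-he_l)}{2h}$. For $A\subset\mathbb Z^8_h$: $N(x)=\{x,x\pm he_0,\dots,x\pm he_7\}$, $\partial A=\{x\in\mathbb Z^8_h:\ N(x)\cap A\neq\emptyset,\ N(x)\cap(\mathbb Z^8_h\setminus A)\neq\emptyset\}$, $A^\circ=A\setminus\partial A$. A family $(B^h)_{h>0}$ with $B^h\subset\mathbb Z^8_h$ converges to a bounded domain $B\subset\mathbb R^8$ if, as $h\to0^+$, $\max_{\alpha\in\partial B}\min_{\beta\in\partial B^h}\|\alpha-\beta\|\to0$, $\max_{\alpha\in\partial B^h}\min_{\beta\in\partial B}\|\alpha-\beta\|\to0$, $\max_{\alpha\in\overline B}\min_{\beta\in B^h}\|\alpha-\beta\|\to0$,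 and $\max_{\alpha\in B^h}\min_{\beta\in\overline B}\|\alpha-\beta\|\to0$ (topological $\partial B,\overline B$ in $\mathbb R^8$; discrete $\partial B^h$). *)

(* Defs.v *)
From HB Require Import structures.
From mathcomp Require Import all_boot all_order all_algebra.
From mathcomp Require Import all_classical all_reals all_analysis.
Set Implicit Arguments. Unset Strict Implicit. Unset Printing Implicit Defensive.
Import Order.TTheory GRing.Theory Num.Theory.
Import numFieldNormedType.Exports.
Local Open Scope classical_set_scope.
Local Open Scope ring_scope.

Section Octo.
Variable R : realType.

(* R^8 and the octonions O, both represented as row vectors 'rV[R]_8. *)
Definition pt := 'rV[R]_8.

Definition ebasis (l : 'I_8) : pt := \row_j (if j == l then 1 else 0).

Definition enorm (x : pt) : R := Num.sqrt (\sum_i (x 0 i) ^+ 2).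

(* Octonion multiplication table (Fano-plane convention):
   e_i e_j = e_k for the cyclically ordered triples below, e_j e_i = -e_k,
   e_i^2 = -1 (i >= 1), e_0 = 1.  The index of e_i e_j is always i xor j. *)
Definition fano_triples : seq (nat * nat * nat) :=
  [:: (1,2,3); (1,4,5); (1,7,6); (2,4,6); (2,5,7); (3,4,7); (3,6,5)]%N.

Definition fano_pos (i j : nat) : bool :=
  has (fun t => let: (a, b, c) := t in
          [|| (i == a) && (j == b), (i == b) && (j == c) | (i == c) && (j == a)])%N
      fano_triples.

Definition osign (i j : 'I_8) : R :=
  if (i == 0%N :> nat) || (j == 0%N :> nat) then 1
  else if i == j then -1
  else if fano_pos i j then 1 else -1.

Definition oidx (i j : 'I_8) : 'I_8 := inord (Nat.lxor i j).

Definition omul (a b : pt) : pt :=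
  \sum_(i < 8) \sum_(j < 8) (a 0 i * b 0 j * osign i j) *: ebasis (oidx i j).

Definition Dop (f : pt -> pt) (x : pt) : pt :=
  \sum_(l < 8) omul (ebasis l) ('D_(ebasis l) f x).

Definition Dh (h : R) (f : pt -> pt) (x : pt) : pt :=
  \sum_(l < 8) omul (ebasis l)
     ((2 * h)^-1 *: (f (x + h *: ebasis l) - f (x - h *: ebasis l))).

Definition lattice (h : R) : set pt :=
  [set x | forall i, exists k : int, x 0 i = k%:~R * h].

Definition nbr (h : R) (x : pt) : set pt :=
  [set y | y = x \/ exists l, y = x + h *: ebasis l \/ y = x - h *: ebasis l].

Definition dbnd (h : R) (A : set pt) : set pt :=
  [set x | lattice h x /\ (exists y, nbr h x y /\ A y)
           /\ (exists y, nbr h x y /\ lattice h y /\ ~ A y)].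

Definition dint (h : R) (A : set pt) : set pt := A `\` dbnd h A.

Definition tbnd (B : set pt) : set pt := closure B `\` interior B.

Definition bounded_domain (B : set pt) : Prop :=
  open B /\ connected B /\ bounded_set B.

(* "for all a in S, min_{b in T} |a - b| < eps" *)
Definition close_to (eps : R) (S T : set pt) : Prop :=
  forall a, S a -> exists2 b, T b & enorm (a - b) < eps.

Definition converges_to (Bh : R -> set pt) (B : set pt) : Prop :=
  (forall h, 0 < h -> Bh h `<=` lattice h) /\
  forall eps, 0 < eps -> exists2 delta, 0 < delta & forall h, 0 < h -> h < delta ->
    [/\ close_to eps (tbnd B) (dbnd h (Bh h)),
        close_to eps (dbnd h (Bh h)) (tbnd B),
        close_to eps (closure B) (Bh h)
      & close_to eps (Bh h) (closure B)].

Definition C1_on (B : set pt) (f : pt -> pt) : Prop :=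
  (forall x, B x -> differentiable f x) /\
  forall l : 'I_8, {within B, continuous (fun x => 'D_(ebasis l) f x)}.

End Octo.

(* Main.v *)
Require Import Defs.
From HB Require Import structures.
From mathcomp Require Import all_boot all_order all_algebra.
From mathcomp Require Import all_classical all_reals all_analysis.
Import Order.TTheory GRing.Theory Num.Theory.
Import numFieldNormedType.Exports.
Local Open Scope classical_set_scope.
Local Open Scope ring_scope.
Set Implicit Arguments. Unset Strict Implicit. Unset Printing Implicit Defensive.

Section Aux.
Variable R : realType.
Implicit Types (v w : pt R).

Lemma osign_norm (i j : 'I_8) : `|osign R i j| = 1.
Proof. rewrite /osign; repeat case: ifP => _; by rewrite ?normrN normr1. Qed.

Lemma omul_e (l : 'I_8) v :
  omul (ebasis R l) v = \sum_(j < 8) (v 0 j * osign R l j) *: ebasis R (oidx l j).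
Proof.
rewrite /omul (bigD1 l) //=.
rewrite [X in _ + X](_ : _ = 0) ?addr0.
  by apply: eq_bigr => j _; rewrite !mxE eqxx mul1r.
apply: big1 => i il; apply: big1 => j _; by rewrite !mxE (negbTE il) !mul0r scale0r.
Qed.

Lemma omulD l v w : omul (ebasis R l) (v + w) = omul (ebasis R l) v + omul (ebasis R l) w.
Proof. rewrite !omul_e -big_split /=; apply: eq_bigr => j _; by rewrite mxE mulrDl scalerDl. Qed.

Lemma omulZ l (c : R) v : omul (ebasis R l) (c *: v) = c *: omul (ebasis R l) v.
Proof. rewrite !omul_e scaler_sumr; apply: eq_bigr => j _. by rewrite !mxE scalerA mulrA. Qed.

Lemma omul0 l : omul (ebasis R l) 0 = 0.
Proof. by rewrite omul_e; apply: big1 => j _; rewrite mxE mul0r scale0r. Qed.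

Lemma omulN l v : omul (ebasis R l) (- v) = - omul (ebasis R l) v.
Proof. by rewrite -scaleN1r omulZ scaleN1r. Qed.

Lemma omulB l v w : omul (ebasis R l) (v - w) = omul (ebasis R l) v - omul (ebasis R l) w.
Proof. by rewrite omulD omulN. Qed.

Lemma omul_sum l (I : Type) (r : seq I) (P : pred I) (F : I -> pt R) :
  omul (ebasis R l) (\sum_(i <- r | P i) F i) = \sum_(i <- r | P i) omul (ebasis R l) (F i).
Proof. by elim/big_rec2: _ => [|i a b _ <-]; rewrite ?omul0 ?omulD. Qed.

Lemma omul_comp l v (m : 'I_8) :
  `|omul (ebasis R l) v 0 m| <= \sum_(j < 8) `|v 0 j|.
Proof.
rewrite omul_e summxE; apply: le_trans (ler_norm_sum _ _ _) _.
apply: ler_sum => j _; rewrite !mxE normrM normrM osign_norm mulr1.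
by apply: ler_piMr => //; case: eqP; rewrite ?normr1 ?normr0.
Qed.

End Aux.
Section Comb.
Variable R : realType.

Definition upd N (k : {ffun 'I_8 -> 'I_N}) (l : 'I_8) (j : 'I_N) : {ffun 'I_8 -> 'I_N} :=
  [ffun i => if i == l then j else k i].

Lemma upd_l N k l j : @upd N k l j l = j.
Proof. by rewrite ffunE eqxx. Qed.

Lemma decomp (V : zmodType) N (G : {ffun 'I_8 -> 'I_N} -> V) l a :
  \sum_k G k = \sum_(k : {ffun 'I_8 -> 'I_N} | k l == a) \sum_j G (upd k l j).
Proof.
rewrite (partition_big (fun k => upd k l a) (fun k0 => k0 l == a)) /=; last first.
  by move=> k _; rewrite upd_l.
apply: eq_bigr => k0 /eqP k0l.
rewrite (reindex_onto (fun j => upd k0 l j) (fun k => k l)) /=; last first.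
  move=> k /eqP <-; apply/ffunP => i; rewrite !ffunE; by case: eqP => // ->.
apply: eq_bigl => j; rewrite upd_l eqxx andbT; apply/eqP/ffunP => i.
rewrite !ffunE; case: eqP => // ->; by rewrite k0l.
Qed.

Lemma count_face N l (a : 'I_N.+1) :
  \sum_(k : {ffun 'I_8 -> 'I_N.+1} | k l == a) (1 : R) = (N.+1 ^ 7)%:R.
Proof.
have := decomp (fun _ : {ffun 'I_8 -> 'I_N.+1} => (1:R)) l a.
rewrite sumr_const card_ffun !card_ord.
under eq_bigr do rewrite sumr_const card_ord.
move=> h; rewrite sumr_const -mulrnA in h; rewrite sumr_const.
move/eqP: h; rewrite eqr_nat expnS => /eqP h.
by apply/eqP; rewrite eqr_nat -(eqn_pmul2l (ltn0Sn N)) h.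
Qed.

End Comb.
From mathcomp Require Import ring lra.
Section Pts.
Variable R : realType.

Definition Pt (p : pt R) (h : R) (c : 'I_8 -> R) : pt R := \row_i (p 0 i + h * c i).
Definition kc N (k : {ffun 'I_8 -> 'I_N}) : 'I_8 -> R := fun i => (k i)%:R.
Definition qc N (k : {ffun 'I_8 -> 'I_N}) (l : 'I_8) (z : R) : 'I_8 -> R :=
  fun i => if i == l then z else (k i)%:R.

Lemma Pt_shiftP N p h (k : {ffun 'I_8 -> 'I_N}) l :
  Pt p h (kc k) + h *: ebasis R l = Pt p h (qc k l ((k l)%:R + 1)).
Proof. apply/rowP => i; rewrite !mxE /kc /qc; case: eqP => [->|_]; ring. Qed.

Lemma Pt_shiftN N p h (k : {ffun 'I_8 -> 'I_N}) l :
  Pt p h (kc k) - h *: ebasis R l = Pt p h (qc k l ((k l)%:R - 1)).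
Proof. apply/rowP => i; rewrite !mxE /kc /qc; case: eqP => [->|_]; ring. Qed.

Lemma Pt_seg N p h (k : {ffun 'I_8 -> 'I_N}) l z t :
  Pt p h (qc k l (z + t)) = (h * t) *: ebasis R l + Pt p h (qc k l z).
Proof. apply/rowP => i; rewrite !mxE /qc; case: eqP => [->|_]; ring. Qed.

Lemma qc_upd N (k : {ffun 'I_8 -> 'I_N}) l j z : qc (upd k l j) l z = qc k l z.
Proof. apply/funext => i; rewrite /qc ffunE; by case: eqP. Qed.

Lemma tele (g : pt R -> pt R) (Q : R -> pt R) N :
  \sum_(j < N) (g (Q (j%:R + 1)) - g (Q (j%:R - 1))) =
  (g (Q N%:R) - g (Q 0)) + (g (Q (N%:R - 1)) - g (Q (-1))).
Proof.
rewrite -(big_mkord xpredT (fun j => g (Q (j%:R + 1)) - g (Q (j%:R - 1)))).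
rewrite (eq_bigr (fun j => (g (Q j.+1%:R) - g (Q j%:R)) + (g (Q (j.+1%:R - 1)) - g (Q (j%:R - 1))))); last first.
  move=> j _; rewrite -natr1 addrK; by rewrite addrA subrK.
rewrite big_split /= !telescope_sumr // sub0r; done.
Qed.

Lemma box_sum (g : pt R -> pt R) p h N l (a : 'I_N) :
  \sum_(k : {ffun 'I_8 -> 'I_N}) (g (Pt p h (kc k) + h *: ebasis R l) - g (Pt p h (kc k) - h *: ebasis R l)) =
  \sum_(k : {ffun 'I_8 -> 'I_N} | k l == a)
     ((g (Pt p h (qc k l N%:R)) - g (Pt p h (qc k l 0)))
      + (g (Pt p h (qc k l (N%:R - 1))) - g (Pt p h (qc k l (-1))))).
Proof.
rewrite (decomp _ l a); apply: eq_bigr => k _.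
rewrite -(tele g (fun z => Pt p h (qc k l z))); apply: eq_bigr => j _.
by rewrite Pt_shiftP Pt_shiftN !qc_upd !upd_l.
Qed.

End Pts.
Arguments kc {R N} k _.
Arguments qc {R N} k l z _.
Section Anal.
Variable R : realType.
Implicit Types (f : pt R -> pt R).

Lemma is_derive_line f (y e : pt R) (t : R) :
  differentiable f (t *: e + y) ->
  is_derive t 1 (fun s : R => f (s *: e + y)) ('D_e f (t *: e + y)).
Proof.
move=> df.
have E : (fun h : R => h^-1 *: (((fun s : R => f (s *: e + y)) \o shift t) (h *: 1) - f (t *: e + y)))
  = (fun h : R => h^-1 *: ((f \o shift (t *: e + y)) (h *: e) - f (t *: e + y))).
  apply/funext => h /=; congr (_ *: (f _ - _)).
  by rewrite /shift /= scalerDl [h *: 1]mulr1 addrA.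
apply: DeriveDef.
  have D : derivable f (t *: e + y) e by exact: diff_derivable.
  by rewrite /derivable E.
by rewrite /derive /= E.
Qed.

Lemma is_derive_coord (g : R -> pt R) (t : R) (d : pt R) j :
  is_derive t 1 g d -> is_derive t 1 (fun s => g s 0 j) (d 0 j).
Proof.
case=> dg <-.
have E : (fun h : R => h^-1 *: (((fun s => g s 0 j) \o shift t) (h *: 1) - g t 0 j))
  = (fun M : pt R => M 0 j) \o (fun h : R => h^-1 *: ((g \o shift t) (h *: 1) - g t)).
  by apply/funext => h /=; rewrite !mxE.
have C : ((fun M : pt R => M 0 j) \o (fun h : R => h^-1 *: ((g \o shift t) (h *: 1) - g t)))
    @ 0^' --> ('D_1 g t) 0 j.
  apply: continuous_cvg; first exact: coord_continuous.
  exact: dg.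
apply: DeriveDef; first by rewrite /derivable E; apply/cvg_ex; eexists; exact: C.
by rewrite /derive E; apply: cvg_lim.
Qed.

Lemma mvt_est f (y e d : pt R) (t eta : R) j :
  0 <= t ->
  (forall s, 0 <= s <= t -> differentiable f (s *: e + y) /\
      `|('D_e f (s *: e + y) - d) 0 j| <= eta) ->
  `|(f (t *: e + y) - f y - t *: d) 0 j| <= t * eta.
Proof.
move=> t0 H.
have der s : 0 <= s <= t -> is_derive s 1 (fun s => f (s *: e + y) 0 j) ('D_e f (s *: e + y) 0 j).
  by move=> /H [df _]; apply: is_derive_coord; apply: is_derive_line.
have [c c0t Ec] : exists2 c, c \in `[0, t] &
    f (t *: e + y) 0 j - f (0 *: e + y) 0 j = 'D_e f (c *: e + y) 0 j * (t - 0).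
  apply: (@MVT_segment R (fun s => f (s *: e + y) 0 j) (fun s => 'D_e f (s *: e + y) 0 j)) => //.
    move=> s; rewrite in_itv /= => /andP [s0 st]; apply: der; rewrite !ltW //.
  apply: continuous_in_subspaceT => s; rewrite inE /= in_itv /= => st.
  have [dr _] := der s st.
  apply: differentiable_continuous; exact/derivable1_diffP.
rewrite scale0r add0r subr0 in Ec.
rewrite !mxE Ec [t * d 0 j]mulrC -mulrBl normrM (ger0_norm t0) mulrC ler_wpM2l //.
move: c0t; rewrite in_itv /= => /H [_]; by rewrite !mxE.
Qed.

End Anal.
Section Est.
Variable R : realType.

Lemma Dh_box (g : pt R -> pt R) p h N (a : 'I_N) :
  \sum_(k : {ffun 'I_8 -> 'I_N}) Dh h g (Pt p h (kc k)) =
  (2 * h)^-1 *: \sum_(l < 8) omul (ebasis R l)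
    (\sum_(k : {ffun 'I_8 -> 'I_N} | k l == a)
     ((g (Pt p h (qc k l N%:R)) - g (Pt p h (qc k l 0)))
      + (g (Pt p h (qc k l (N%:R - 1))) - g (Pt p h (qc k l (-1)))))).
Proof.
rewrite /Dh exchange_big /= scaler_sumr; apply: eq_bigr => l _.
by rewrite -omulZ -box_sum scaler_sumr omul_sum.
Qed.

Lemma final_est (d T : 'I_8 -> pt R) (c s bnd : R) :
  0 < c -> 0 < s ->
  \sum_(l < 8) omul (ebasis R l) (T l) = 0 ->
  (forall l j, `|(T l - (c * s) *: d l) 0 j| <= c * bnd) ->
  forall m, `|(\sum_(l < 8) omul (ebasis R l) (d l)) 0 m| <= 64 * bnd / s.
Proof.
move=> c0 s0 HT Hb m.
have cs0 : c * s != 0 by rewrite mulf_neq0 // gt_eqF.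
have E : \sum_(l < 8) omul (ebasis R l) (d l) =
   - (c * s)^-1 *: \sum_(l < 8) omul (ebasis R l) (T l - (c * s) *: d l).
  under [in RHS]eq_bigr do rewrite omulB omulZ.
  rewrite big_split /= HT add0r sumrN -scaler_sumr scalerN scaleNr opprK scalerA mulVf // scale1r.
  by [].
rewrite E mxE normrM normrN normfV (gtr0_norm (mulr_gt0 c0 s0)) summxE.
rewrite ler_pdivrMl ?mulr_gt0 //.
apply: (le_trans (ler_norm_sum _ _ _)).
apply: (@le_trans _ _ (\sum_(l < 8) \sum_(j < 8) `|(T l - (c * s) *: d l) 0 j|)).
  by apply: ler_sum => l _; apply: omul_comp.
apply: (@le_trans _ _ (\sum_(l < 8) \sum_(j < 8) (c * bnd))).
  by apply: ler_sum => l _; apply: ler_sum => j _; apply: Hb.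
rewrite !sumr_const !card_ord -mulrnA -mulr_natr.
rewrite le_eqVlt; apply/orP; left; apply/eqP.
have sn : s != 0 by rewrite gt_eqF.
by field.
Qed.


Lemma sum_bound (I : finType) (P : pred I) (F : I -> pt R) (v : pt R) bnd j :
  (forall i, P i -> `|(F i - v) 0 j| <= bnd) ->
  `|(\sum_(i | P i) F i - (\sum_(i | P i) (1 : R)) *: v) 0 j| <= (\sum_(i | P i) (1 : R)) * bnd.
Proof.
move=> H; rewrite scaler_suml -sumrB summxE mulr_suml.
apply: le_trans (ler_norm_sum _ _ _) _; apply: ler_sum => i Pi.
by rewrite scale1r mul1r H.
Qed.

Lemma four_bound (f g : pt R -> pt R) (y1 y2 y3 y4 d : pt R) s eps eta j :
  `|(g y1 - f y1) 0 j| <= eps -> `|(g y2 - f y2) 0 j| <= eps ->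
  `|(g y3 - f y3) 0 j| <= eps -> `|(g y4 - f y4) 0 j| <= eps ->
  `|(f y1 - f y2 - s *: d) 0 j| <= eta -> `|(f y3 - f y4 - s *: d) 0 j| <= eta ->
  `|((g y1 - g y2) + (g y3 - g y4) - (2 * s) *: d) 0 j| <= 4 * eps + 2 * eta.
Proof.
rewrite !mxE !ler_norml => /andP[? ?] /andP[? ?] /andP[? ?] /andP[? ?] /andP[? ?] /andP[? ?].
apply/andP; split; lra.
Qed.

Lemma coord_enorm (v : pt R) j : `|v 0 j| <= enorm v.
Proof.
rewrite /enorm -sqrtr_sqr ler_sqrt ?sumr_ge0 // => [|i _]; last exact: sqr_ge0.
by rewrite (bigD1 j) //= lerDl sumr_ge0 // => i _; exact: sqr_ge0.
Qed.

End Est.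
Section Geom.
Variable R : realType.
Implicit Types (x y z w : pt R).

Definition cube x (r : R) z := forall i, `|z 0 i - x 0 i| < r.

Lemma open_cube (B : set (pt R)) x : open B -> B x -> exists2 r, 0 < r & forall z, cube x r z -> B z.
Proof.
rewrite openE => /[apply] /nbhs_ballP [r r0 Hr]; exists r => // z Hz; apply: Hr.
split => // i j; rewrite (ord1 i) /ball /= distrC; exact: Hz.
Qed.

Lemma tbnd_notin (B : set (pt R)) t : open B -> tbnd B t -> ~ B t.
Proof. by move=> /interior_id oB [_]; rewrite oB. Qed.

Lemma enorm_cube a b e : enorm (a - b) < e -> cube b e a.
Proof. by move=> H i; apply: le_lt_trans H; have := coord_enorm (a - b) i; rewrite !mxE. Qed.

Lemma lat_gap (h a b : R) : 0 < h -> (exists n : int, a = n%:~R * h) -> (exists n : int, b = n%:~R * h) ->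
  a != b -> h <= `|a - b|.
Proof.
move=> h0 [n ->] [m ->] nm; rewrite -mulrBl -intrB normrM (gtr0_norm h0) ler_peMl //.
  exact: ltW.
apply: norm_intr_ge1; first exact: intr_int.
by apply: contra nm; rewrite intrB subr_eq0 => /eqP ->.
Qed.

Lemma gap_cases (a b h : R) : h <= `|a - b| -> (a < b -> a + h <= b) /\ (~~ (a < b) -> b <= a - h).
Proof.
move=> g; split => ab.
  by rewrite ltr0_norm ?subr_lt0 // in g; lra.
by rewrite -leNgt in ab; rewrite ger0_norm ?subr_ge0 // in g; lra.
Qed.

Lemma lattice_shift h w i (t : R) : (t = h \/ t = - h) -> lattice h w -> lattice h (w + t *: ebasis R i).
Proof.
move=> ht Hw j; have [n Hn] := Hw j; rewrite !mxE Hn.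
case: eqP => _; last by exists n; rewrite mulr0 addr0.
case: ht => ->; [exists (n + 1) | exists (n - 1)]; rewrite intrD ?rmorphN1 ?rmorph1 ?mulrN1; ring.
Qed.

Lemma nbr_shift h w i (t : R) : (t = h \/ t = - h) -> nbr h w (w + t *: ebasis R i).
Proof. by move=> [->|->]; right; exists i; [left|right]; rewrite // scaleNr. Qed.

Lemma region (h rho : R) (A : set (pt R)) x b :
  0 < h -> A `<=` lattice h ->
  (forall w, lattice h w -> cube x rho w -> ~ dbnd h A w) ->
  A b -> cube x rho b ->
  forall z, lattice h z -> cube x rho z -> A z.
Proof.
move=> h0 AL Hnd Ab cb z Lz cz.
have step w i t : (t = h \/ t = - h) -> A w -> cube x rho w -> A (w + t *: ebasis R i).
  move=> ht Aw cw; apply: contrapT => nA; apply: (Hnd w (AL _ Aw) cw).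
  split; first exact: AL.
  split; first by exists w; split => //; left.
  exists (w + t *: ebasis R i); split; first exact: nbr_shift.
  by split => //; apply: lattice_shift => //; apply: AL.
suff H n : forall w, A w -> cube x rho w -> \sum_i `|w 0 i - z 0 i| <= n%:R * h -> A z.
  have S0 : 0 <= (\sum_i `|b 0 i - z 0 i|) / h by apply: divr_ge0; [apply: sumr_ge0 | exact: ltW].
  apply: (H _ b Ab cb); rewrite -ler_pdivrMr //; exact/ltW/archi_boundP.
elim: n => [|n IH] w Aw cw.
  rewrite mul0r => Hs; suff -> : z = w by [].
  apply/rowP => i; apply/eqP; rewrite eq_sym -subr_eq0 -normr_eq0.
  apply/eqP/le_anti; rewrite normr_ge0 andbT; apply: le_trans Hs.
  by rewrite (bigD1 i) //= lerDl sumr_ge0.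
move=> Hs; have [<-//|wz] := eqVneq w z.
have [i wzi] : exists i, w 0 i != z 0 i.
  apply/existsP; apply: contraR wz => /existsPn H; apply/eqP/rowP => i.
  by apply/eqP; have := H i; rewrite negbK.
have [gap1 gap2] := gap_cases (lat_gap h0 (AL _ Aw i) (Lz i) wzi).
pose t := if w 0 i < z 0 i then h else - h.
have ht : t = h \/ t = - h by rewrite /t; case: ifP; [left|right].
apply: (IH (w + t *: ebasis R i)); first exact: step.
  move=> j; rewrite !mxE; case: eqP => [->|_]; last by rewrite mulr0 addr0; exact: cw.
  have := cw i; have := cz i; rewrite mulr1 /t.
  case: ifP => wlt; rewrite !ltr_norml => /andP [c1 c2] /andP [d1 d2]; apply/andP; split.
  - have := gap1 wlt; lra.
  - have := gap1 wlt; lra.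
  - have := gap2 (negbT wlt); lra.
  - have := gap2 (negbT wlt); lra.
move: Hs; rewrite (bigD1 i) //= [X in _ -> X <= _](bigD1 i) //=.
have -> : \sum_(j < 8 | j != i) `|(w + t *: ebasis R i) 0 j - z 0 j| = \sum_(j < 8 | j != i) `|w 0 j - z 0 j|.
  by apply: eq_bigr => j ji; rewrite !mxE (negbTE ji) mulr0 addr0.
rewrite !mxE eqxx mulr1 /t -natr1 mulrDl mul1r.
case: ifP => wlt.
  have g := gap1 wlt.
  rewrite (ler0_norm (_ : w 0 i + h - z 0 i <= 0)); last by lra.
  rewrite (ltr0_norm (_ : w 0 i - z 0 i < 0)); last by lra.
  lra.
have g := gap2 (negbT wlt).
rewrite (ger0_norm (_ : 0 <= w 0 i + - h - z 0 i)); last by lra.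
rewrite (ger0_norm (_ : 0 <= w 0 i - z 0 i)); last by lra.
lra.
Qed.

End Geom.
Section Main.
Variable R : realType.
Implicit Types (x y z w p : pt R).

Lemma cube_sym x y e : cube x e y -> cube y e x.
Proof. by move=> H i; rewrite distrC. Qed.

Lemma cube_trans x y z a b : cube x a y -> cube y b z -> cube x (a + b) z.
Proof.
move=> H1 H2 i; have := H1 i; have := H2 i; rewrite !ltr_norml => /andP[? ?] /andP[? ?].
apply/andP; split; lra.
Qed.

Lemma cube_le x y a b : a <= b -> cube x a y -> cube x b y.
Proof. by move=> ab H i; apply: lt_le_trans ab. Qed.

Lemma small0 (a : R) : (forall e, 0 < e -> `|a| <= e) -> a = 0.
Proof.
move=> H; apply/eqP; apply: contraT => a0.
have := H (`|a| / 2); rewrite divr_gt0 ?normr_gt0 // => /(_ isT).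
have : 0 < `|a| by rewrite normr_gt0.
lra.
Qed.

Lemma cube_Pt x p (s h : R) (M : nat) (c : 'I_8 -> R) :
  cube x s p -> 0 < h -> h * M%:R = s -> (1 <= M)%N ->
  (forall i, -1 <= c i <= M%:R) -> cube x (2 * s) (Pt p h c).
Proof.
move=> cp h0 hM M1 Hc i; rewrite !mxE.
have := cp i; have := Hc i; rewrite ltr_norml => /andP[c1 c2] /andP[p1 p2].
have M1' : 1 <= (M%:R : R) by rewrite ler1n.
have e1 : 0 <= h * (M%:R - c i) by apply: mulr_ge0; [exact: ltW | lra].
have e2 : 0 <= h * (c i + 1) by apply: mulr_ge0; [exact: ltW | lra].
have e3 : 0 <= h * (M%:R - 1) by apply: mulr_ge0; [exact: ltW | lra].
rewrite ltr_norml; apply/andP; split; nra.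
Qed.

Lemma lattice_Pt p (h : R) (c : 'I_8 -> R) :
  lattice h p -> (forall i, exists n : int, c i = n%:~R) -> lattice h (Pt p h c).
Proof.
move=> Lp Hc i; have [m Hm] := Lp i; have [n Hn] := Hc i.
by exists (m + n); rewrite !mxE Hm Hn intrD; ring.
Qed.

Lemma qc_int N (k : {ffun 'I_8 -> 'I_N}) l (z : R) : (exists n : int, z = n%:~R) ->
  forall i, exists n : int, qc k l z i = n%:~R.
Proof.
move=> [n Hn] i; rewrite /qc; case: eqP => _; first by exists n.
by exists (k i)%:Z; rewrite pmulrn.
Qed.

Lemma qc_range N (k : {ffun 'I_8 -> 'I_N}) l (z : R) : -1 <= z <= N%:R ->
  forall i, -1 <= qc k l z i <= N%:R.
Proof.
move=> Hz i; rewrite /qc; case: eqP => _ //.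
apply/andP; split; first by apply: le_trans (ler0n _ _); rewrite lerN10.
by rewrite ler_nat ltnW.
Qed.

Lemma kc_int N (k : {ffun 'I_8 -> 'I_N}) i : exists n : int, kc (R:=R) k i = n%:~R.
Proof. by exists (k i)%:Z; rewrite /kc pmulrn. Qed.

Lemma kc_range N (k : {ffun 'I_8 -> 'I_N}) i : -1 <= kc (R:=R) k i <= N%:R.
Proof.
apply/andP; split; first by apply: le_trans (ler0n _ _); rewrite lerN10.
by rewrite /kc ler_nat ltnW.
Qed.

Lemma fh_close f (g : pt R -> pt R) y (eps : R) j :
  enorm (f y - g y) < eps -> `|(g y - f y) 0 j| <= eps.
Proof.
move=> H; apply/ltW/(le_lt_trans _ H); have := coord_enorm (f y - g y) j.
by rewrite -normrN !mxE opprD opprK addrC.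
Qed.

End Main.
Section Arith.
Variable R : realType.
Lemma arith_a (s r : R) : 0 < s -> s <= r / 8 -> (4 * s + s <= r) /\ (2 * s <= r).
Proof. move=> s0 sr; have : r / 8 * 8 = r by rewrite divfK. split; lra. Qed.
Lemma arith_b (s : R) : 0 < s -> (s <= 4 * s) /\ (2 * s <= 4 * s).
Proof. move=> s0; split; lra. Qed.
Lemma arith_rng (z t M : R) : -1 <= z -> z + M <= M -> 0 <= t -> t <= M -> -1 <= z + t <= M.
Proof. move=> *; apply/andP; split; lra. Qed.
Lemma arith_pts (M : R) : 1 <= M ->
  [/\ (-1 : R) <= M <= M, (-1 : R) <= 0 <= M, (-1 : R) <= M - 1 <= M & (-1 : R) <= -1 <= M].
Proof. by move=> *; split; apply/andP; split; lra. Qed.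
Lemma arith_mv (M : R) : 1 <= M -> [/\ -1 <= 0 :> R, 0 + M <= M, -1 <= -1 :> R & -1 + M <= M].
Proof. by move=> *; split; lra. Qed.
Lemma arith_fin (eps s eta : R) : 0 < s -> eta = eps / 128 -> 0 < eps ->
  64 * (4 * (eps * s / 512) + 2 * (s * eta)) / (2 * s) <= eps.
Proof.
move=> s0 -> e0.
have -> : 64 * (4 * (eps * s / 512) + 2 * (s * (eps / 128))) / (2 * s) = 3 * eps / 4.
  by field; rewrite gt_eqF.
lra.
Qed.
End Arith.
Unset Implicit Arguments.
Theorem mainTheorem19 (R : realType) (B : set (pt R)) (Bh : R -> set (pt R))
  (f : pt R -> pt R) (fh : R -> pt R -> pt R) :
  bounded_domain B ->
  converges_to Bh B ->
  C1_on B f ->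
  (forall h, 0 < h -> forall x, dint h (Bh h) x -> Dh h (fh h) x = 0) ->
  (forall eps, 0 < eps -> exists2 delta, 0 < delta & forall h, 0 < h -> h < delta ->
      forall x, Bh h x -> B x -> enorm (f x - fh h x) < eps) ->
  forall x, B x -> Dop f x = 0.
Proof.
move=> [oB _] [Blat Hconv] [Hdiff Hcont] HD Hf x Bx.
pose d l := 'D_(ebasis R l) f x.
apply/rowP => m; rewrite [RHS]mxE /Dop -/d; apply: small0 => eps e0.
have [r r0 Hr] := open_cube oB Bx.
pose eta := eps / 128.
have eta0 : 0 < eta by apply: divr_gt0; rewrite // ltr0n.
have Hc1 : forall l, \forall z \near x, ball (d l) eta ('D_(ebasis R l) f z).
  move=> l; have := Hcont l; rewrite continuous_open_subspace // => /(_ x (mem_set Bx)) cx.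
  by apply: cx; apply: nbhsx_ballx.
have [rho rho0 Hrho] : exists2 rho, 0 < rho & forall z, cube x rho z ->
    forall l j, `|('D_(ebasis R l) f z - d l) 0 j| < eta.
  have H : \forall z \near x, forall l, ball (d l) eta ('D_(ebasis R l) f z) by exact: (filter_forall _ Hc1).
  have [rho rho0 Hb] := iffLR (nbhs_ballP _ _) H; exists rho => // z cz l j.
  have bz : ball x rho z by split => // i k; rewrite (ord1 i) /ball /= distrC; exact: cz.
  have [_ /(_ 0 j)] := Hb z bz l; by rewrite /ball /= !mxE distrC.
pose s := Num.min r rho / 8.
have s0 : 0 < s by rewrite divr_gt0 // lt_min r0.
have sr : s <= r / 8 by rewrite ler_pM2r // ge_min lexx.
have srho : s <= rho / 8 by rewrite ler_pM2r // ge_min lexx orbT.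
have [d1 d10 Hd1] := Hconv s s0.
have e2 : 0 < eps * s / 512 by apply: divr_gt0; [exact: mulr_gt0 | rewrite ltr0n].
have [d2 d20 Hd2] := Hf _ e2.
pose dl := Num.min d1 d2.
have dl0 : 0 < dl by rewrite lt_min d10.
pose n := Num.bound (s / dl).
pose M := n.+1.
have Mpos : (0 < M%:R :> R) by rewrite ltr0n.
have hn : s / dl < M%:R.
  apply: lt_le_trans (archi_boundP _) _; first by rewrite divr_ge0 // ltW.
  by rewrite ler_nat.
pose h := s / M%:R.
have h0 : 0 < h by rewrite divr_gt0.
have hM : h * M%:R = s by rewrite /h divfK // gt_eqF.
have hdl : h < dl by rewrite /h ltr_pdivrMr // mulrC -ltr_pdivrMr.
have hd1 : h < d1 by apply: lt_le_trans hdl _; rewrite ge_min lexx.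
have hd2 : h < d2 by apply: lt_le_trans hdl _; rewrite ge_min lexx orbT.
have [c1 c2 c3 c4] := Hd1 h h0 hd1.
have [b Bhb xb] := c3 x (subset_closure Bx).
have cb : cube x s b := cube_sym (enorm_cube xb).
have Lb : lattice h b := Blat h h0 b Bhb.
have nd : forall w, lattice h w -> cube x (4 * s) w -> ~ dbnd h (Bh h) w.
  move=> w Lw cw Dw; have [t Tt wt] := c2 w Dw.
  apply: (tbnd_notin oB Tt); apply: Hr.
  apply: cube_le (cube_trans cw (cube_sym (enorm_cube wt))).
  by case: (arith_a s0 sr).
have inBh : forall w, lattice h w -> cube x (4 * s) w -> Bh h w.
  apply: (region h0 (Blat h h0) nd Bhb); apply: cube_le cb; by case: (arith_b s0).
have inB : forall w, cube x (2 * s) w -> B w.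
  move=> w cw; apply: Hr; apply: cube_le cw; by case: (arith_a s0 sr).
have inrho : forall w, cube x (2 * s) w -> cube x rho w.
  move=> w cw; apply: cube_le cw; by case: (arith_a s0 srho).
have good c : (forall i, -1 <= c i <= M%:R) -> cube x (2 * s) (Pt b h c).
  by move=> Hc; apply: cube_Pt cb h0 hM _ Hc.
have c24 w : cube x (2 * s) w -> cube x (4 * s) w by apply: cube_le; case: (arith_b s0).
pose T l := \sum_(k : {ffun 'I_8 -> 'I_M} | k l == ord0)
     ((fh h (Pt b h (qc k l M%:R)) - fh h (Pt b h (qc k l 0)))
      + (fh h (Pt b h (qc k l (M%:R - 1))) - fh h (Pt b h (qc k l (-1))))).
have Hsum : \sum_(l < 8) omul (ebasis R l) (T l) = 0.
  have := Dh_box (fh h) b h (ord0 : 'I_M).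
  rewrite big1; last first.
    move=> k _; apply: (HD h h0); split.
      apply: inBh; first by apply: lattice_Pt => // i; exact: kc_int.
      by apply: c24; apply: good; apply: kc_range.
    apply: nd; first by apply: lattice_Pt => // i; exact: kc_int.
    by apply: c24; apply: good; apply: kc_range.
  move/esym/eqP; rewrite scaler_eq0 invr_eq0 mulf_eq0 (gt_eqF h0) orbF.
  by rewrite (_ : (2 : R) == 0 = false) ?pnatr_eq0 //= => /eqP.
have Hbnd : forall l j, `|(T l - ((M ^ 7)%:R * (2 * s)) *: d l) 0 j|
    <= (M ^ 7)%:R * (4 * (eps * s / 512) + 2 * (s * eta)).
  move=> l j; rewrite -(@count_face R n l ord0) -scalerA.
  apply: sum_bound => k _.
  have close z : (exists n0 : int, z = n0%:~R) -> -1 <= z <= M%:R ->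
      `|(fh h (Pt b h (qc k l z)) - f (Pt b h (qc k l z))) 0 j| <= eps * s / 512.
    move=> zi zr; apply: fh_close; apply: (Hd2 h h0 hd2).
      apply: inBh; first by apply: lattice_Pt => // i; exact: qc_int.
      by apply: c24; apply: good; exact: qc_range.
    by apply: inB; apply: good; exact: qc_range.
  have mvt z : -1 <= z -> z + M%:R <= M%:R ->
      `|(f (Pt b h (qc k l (z + M%:R))) - f (Pt b h (qc k l z)) - s *: d l) 0 j| <= s * eta.
    move=> z1 z2; rewrite Pt_seg hM; apply: mvt_est; first exact: ltW.
    move=> tau /andP [t0 ts].
    have -> : tau *: ebasis R l + Pt b h (qc k l z) = Pt b h (qc k l (z + tau / h)).
      by rewrite Pt_seg mulrC divfK // gt_eqF.
    have tM : tau / h <= M%:R by rewrite ler_pdivrMr // mulrC hM.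
    have tz : 0 <= tau / h by rewrite divr_ge0 // ltW.
    have cw : cube x (2 * s) (Pt b h (qc k l (z + tau / h))).
      by apply: good; apply: qc_range; apply: arith_rng.
    split; first exact: Hdiff (inB _ cw).
    by apply/ltW/Hrho/inrho.
  have M1 : (1 : R) <= M%:R by rewrite ler1n.
  have [r1 r2 r3 r4] := arith_pts M1.
  have [m1 m2 m3 m4] := arith_mv M1.
  apply: four_bound.
  - by apply: close; [exists M%:Z; rewrite pmulrn | ].
  - by apply: close; [exists 0; rewrite mulr0z | ].
  - by apply: close; [exists (M%:Z - 1); rewrite intrB pmulrn // | ].
  - by apply: close; [exists (-1); rewrite mulrN1z | ].
  - by have := mvt 0 m1 m2; rewrite add0r.
  - by have := mvt (-1) m3 m4; rewrite [-1 + _]addrC.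
have cpos : (0 : R) < (M ^ 7)%:R by rewrite ltr0n expn_gt0.
have s2 : 0 < 2 * s by rewrite mulr_gt0.
have := final_est cpos s2 Hsum Hbnd m.
move=> H; apply: le_trans H _; exact: arith_fin.
Qed.
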